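(* Let $q,r,\nu$ be positive integers with $q<\nu\le r$. Then the equation $\mathcal{M}^0(z)C=I_q$ (for all $z$) admits a solution $C\in\mathbb{R}^{\nu r\times q}$ not depending on $z$, and the set of such constant solutions is an affine space of dimension $(\nu-q)rq$.
   Context: $u(z)=(1,\dots,z^{q-1})^\top$, $w(z)=(1,\dots,z^{r-1})$, $M(z)=u(z)w(z)\in\mathbb{C}^{q\times r}$, and $\mathcal{M}^0(z)=(M(z),M'(z),\dots,M^{(\nu-1)}(z))\in\mathbb{C}^{q\times\nu r}$, derivatives taken in $z$. *)

(* Defs.v *)
From HB Require Import structures.
From mathcomp Require Import all_boot all_order all_algebra.
From mathcomp Require Import complex.
From mathcomp Require Import reals.
Set Implicit Arguments.
Unset Strict Implicit.
Unset Printing Implicit Defensive.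
Import Order.TTheory GRing.Theory Num.Theory.
Local Open Scope ring_scope.

Definition upoly (F : nzRingType) (q : nat) : 'cV[{poly F}]_q :=
  \col_(i < q) 'X^i.
Definition wpoly (F : nzRingType) (r : nat) : 'rV[{poly F}]_r :=
  \row_(j < r) 'X^j.
Definition Mpoly (F : comNzRingType) (q r : nat) : 'M[{poly F}]_(q, r) :=
  upoly F q *m wpoly F r.

Definition Mder (F : comNzRingType) (q r k : nat) (z : F) : 'M[F]_(q, r) :=
  map_mx (fun p : {poly F} => (p^`(k)).[z]) (Mpoly F q r).

(* M^0(z) = (M(z), M'(z), ..., M^(nu-1)(z)) in F^(q x nu r):
   row i of M^0(z) is the concatenation of the rows i of M^(0)(z), ...,
   M^(nu-1)(z); i.e. entry (i, k * r + l) is M^(k)(z) i l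
   (mxvec lists the entries of a nu x r matrix row-major, cf. mxvecE). *)
Definition M0 (F : comNzRingType) (q r nu : nat) (z : F) : 'M[F]_(q, nu * r) :=
  \matrix_(i < q) mxvec (\matrix_(k < nu, l < r) Mder q r k z i l).

Definition const_solution (R : rcfType) (q r nu : nat) (C : 'M[R]_(nu * r, q)) :=
  forall z : R[i], M0 q r nu z *m map_mx (fun x : R => x%:C)%C C = 1%:M.

Definition affine_of_dim (R : fieldType) (m n d : nat) (S : 'M[R]_(m, n) -> Prop) :=
  exists (C0 : 'M[R]_(m, n)) (V : {vspace 'M[R]_(m, n)}),
    \dim V = d /\ forall C, S C <-> C - C0 \in V.
Arguments const_solution {R} q r nu C.

(* Main.v *)
Require Import Defs.
From HB Require Import structures.
From mathcomp Require Import all_boot all_order all_algebra.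
From mathcomp Require Import complex.
From mathcomp Require Import reals.
From mathcomp Require Import zify.
From Stdlib Require Import ClassicalEpsilon.
Import GRing.Theory Num.Theory.
Local Open Scope ring_scope.

Lemma leibniz (R : nzRingType) (p q : {poly R}) n :
  (p * q)^`(n) = \sum_(t < n.+1) (p^`(n - t) * q^`(t)) *+ 'C(n, t).
Proof.
elim: n => [|n IH]; first by rewrite big_ord1 !derivn0 /=.
rewrite derivnS IH raddf_sum /=.
under eq_bigr => t _.
  rewrite derivMn derivM -!derivnS -subSn; last by rewrite -ltnS.
  rewrite mulrnDl.
over.
rewrite big_split /=.
rewrite [in RHS]big_ord_recl /=.
under [in RHS]eq_bigr => t _ do rewrite /bump /= binS mulrnDr subSS.
rewrite [in RHS]big_split /= addrA; congr (_ + _).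
rewrite big_ord_recl /= big_ord_recr /=.
rewrite !bin0 bin_small // mulr0n addr0; congr (_ + _).
Qed.

Lemma size_derivn_le (R : nzSemiRingType) (p : {poly R}) n : (size (p^`(n)) <= size p)%N.
Proof.
apply/leq_sizeP => j hj; rewrite coef_derivn nth_default ?mul0rn //.
exact: leq_trans hj (leq_addl _ _).
Qed.

Lemma size_Mn_le (R : nzSemiRingType) (p : {poly R}) n : (size (p *+ n) <= size p)%N.
Proof. by apply/leq_sizeP => j hj; rewrite coefMn nth_default ?mul0rn. Qed.

Lemma size_sum_le (R : nzSemiRingType) (I : finType) (P : pred I) (F : I -> {poly R}) m :
  (forall i, P i -> (size (F i) <= m)%N) -> (size (\sum_(i | P i) F i)%R <= m)%N.
Proof.
move=> H; apply: (big_ind (fun p : {poly R} => (size p <= m)%N)) => //; first by rewrite size_poly0.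
by move=> x y hx hy; apply: leq_trans (size_polyD _ _) _; rewrite geq_max hx hy.
Qed.

Section Core.
Variables (R : numFieldType) (q r nu : nat).
Hypothesis hq : (q < nu)%N.
Hypothesis hnr : (nu <= r)%N.

Definition Qp (a : 'I_nu -> {poly R}) (i : nat) := \sum_(k < nu) (a k * 'X^i)^`(k).
Definition ee (a : 'I_nu -> {poly R}) (t : nat) :=
  \sum_(k < nu | (t <= k)%N) (a k)^`(k - t) *+ 'C(k, t).

Lemma Qe a i : Qp a i = \sum_(t < nu) ee a t * ('X^i)^`(t).
Proof.
rewrite /Qp /ee.
under eq_bigr => k _ do rewrite leibniz (big_ord_widen nu (fun t => (a k)^`(k - t) * ('X^i)^`(t) *+ 'C(k, t))) // big_mkcond.
rewrite exchange_big /=.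
under [RHS]eq_bigr => t _ do rewrite mulr_suml big_mkcond.
apply: eq_bigr => t _; apply: eq_bigr => k _ /=.
by rewrite ltnS; case: (t <= k)%N => //; rewrite mulrnAl.
Qed.

Lemma derivXn_small i t : (i < t)%N -> ('X^i : {poly R})^`(t) = 0.
Proof. by move=> h; rewrite derivnXn ffact_small // mulr0n. Qed.

Lemma Qe' a i : (i < q)%N -> Qp a i = \sum_(t < q) ee a t * ('X^i)^`(t).
Proof.
move=> hi; rewrite Qe (@big_ord_widen _ _ _ q nu (fun t => ee a t * ('X^i)^`(t))); last exact: ltnW.
rewrite [LHS](bigID (fun t : 'I_nu => (t < q)%N)) /= [X in _ + X = _]big1 ?addr0 // => t.
by rewrite -leqNgt => ht; rewrite derivXn_small ?mulr0 // (leq_trans hi ht).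
Qed.

Lemma e_uniq (E : nat -> {poly R}) :
  (forall i, (i < q)%N -> \sum_(t < q) E t * ('X^i)^`(t) = 0) ->
  forall t, (t < q)%N -> E t = 0.
Proof.
move=> H; suff: forall n t, (t < n)%N -> (t < q)%N -> E t = 0.
  by move=> h t ht; exact: h t.+1 t (ltnSn _) ht.
elim=> [//|n IH] t; rewrite ltnS leq_eqVlt => /orP [/eqP -> hn|]; last exact: IH.
have := H n hn; rewrite (bigD1 (Ordinal hn)) //= big1 ?addr0; last first.
  move=> u /eqP hu; case: (ltngtP u n) => h.
  - by rewrite IH ?mul0r.
  - by rewrite derivXn_small ?mulr0.
  - by exfalso; apply: hu; apply: val_inj.
rewrite derivnXn subnn ffactnn expr0 mulr_natr => /eqP.
rewrite -scaler_nat scaler_eq0 pnatr_eq0 (negbTE (lt0n_neq0 (fact_gt0 _))) /=.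
by move/eqP.
Qed.


Lemma e_exists (s : R) (j : nat) : exists E : nat -> {poly R},
  (forall t, (size (E t) <= t.+1)%N) /\
  forall i, (i < q)%N -> \sum_(t < q) E t * ('X^i)^`(t) = (s * (i == j)%:R)%:P.
Proof.
suff: forall n, (n <= q)%N -> exists E : nat -> {poly R},
  [/\ (forall t, (size (E t) <= t.+1)%N), (forall t, (n <= t)%N -> E t = 0) &
  (forall i, (i < n)%N -> \sum_(t < q) E t * ('X^i)^`(t) = (s * (i == j)%:R)%:P)].
  by move=> /(_ q (leqnn q)) [E [h1 _ h3]]; exists E.
elim=> [_|n IH hn].
  by exists (fun _ => 0); split => // t; rewrite size_poly0.
have [E [h1 h2 h3]] := IH (ltnW hn).
pose S := \sum_(t < q) E t * ('X^n)^`(t).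
pose D := (n`!%:R : R)^-1 *: ((s * (n == j)%:R)%:P - S).
have EE t : (if t == n then D else E t) = E t + (t == n)%:R *: D.
  case: (t =P n) => [->|_]; first by rewrite h2 // add0r ?eqxx scale1r.
  by rewrite scale0r addr0.
exists (fun t => if t == n then D else E t); split.
- move=> t; case: eqP => [->|_]; last exact: h1.
  apply: leq_trans (size_scale_leq _ _) _.
  apply: leq_trans (size_polyD _ _) _; rewrite geq_max size_polyN size_polyC.
  rewrite (leq_trans (leq_b1 _)) //=.
  apply: size_sum_le => u _.
  have [ht|ht] := leqP u n; last by rewrite derivXn_small // mulr0 size_poly0.
  apply: leq_trans (size_polyMleq _ _) _.
  rewrite derivnXn; apply: (@leq_trans (u.+1 + (n - u).+1).-1); last by lia.
  rewrite -!subn1 leq_sub2r // leq_add //.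
  by rewrite -(size_polyXn R (n - u)); exact: size_Mn_le.
- by move=> t ht; rewrite gtn_eqF // h2 // ltnW.
- move=> i; rewrite ltnS leq_eqVlt => /orP [/eqP ->|hi]; last first.
    rewrite -h3 //; apply: eq_bigr => t _; case: eqP => // ->.
    by rewrite h2 // derivXn_small // !mulr0.
  under eq_bigr => t _ do rewrite EE mulrDl.
  rewrite big_split /= -/S (bigD1 (Ordinal hn)) //= eqxx big1 ?addr0; last first.
    move=> t /eqP ht; have -> : (t == n :> nat) = false.
      by apply/eqP => e; apply: ht; apply: val_inj.
    by rewrite scale0r mul0r.
  rewrite scale1r derivnXn subnn ffactnn expr0 mulr_natr /D -scaler_nat scalerA mulfV.
    by rewrite scale1r addrC subrK.
  by rewrite pnatr_eq0 (negbTE (lt0n_neq0 (fact_gt0 _))).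
Qed.

Lemma ee_split a t (ht : (t < nu)%N) :
  ee a t = a (Ordinal ht) + \sum_(k < nu | (t < k)%N) (a k)^`(k - t) *+ 'C(k, t).
Proof.
rewrite /ee (bigD1 (Ordinal ht)) //= subnn derivn0 binn mulr1n; congr (_ + _).
by apply: eq_bigl => k; rewrite ltn_neqAle -val_eqE /= eq_sym andbC.
Qed.

Lemma a_uniq a : (forall k : 'I_nu, (q <= k)%N -> a k = 0) ->
  (forall t, (t < q)%N -> ee a t = 0) -> forall k, a k = 0.
Proof.
move=> H0 He.
suff: forall m (k : 'I_nu), (q - m <= k)%N -> a k = 0.
  by move=> h k; apply: (h q); rewrite subnn.
elim=> [|m IH] k hk; first by apply: H0; rewrite subn0 in hk.
have [hk'|hk'] := leqP (q - m) k; first exact: IH.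
have kq : (k < q)%N by apply: leq_trans hk' (leq_subr _ _).
have := He k kq; rewrite (@ee_split a k (ltn_ord k)) big1 ?addr0.
  by move=> <-; congr a; apply: val_inj.
move=> k' hkk'; rewrite IH ?raddf0 ?mul0rn //.
by move: hk hk' hkk'; lia.
Qed.


Lemma a_exists (f : 'I_nu -> {poly R}) (E : nat -> {poly R}) :
  (forall k, (size (f k) <= r)%N) -> (forall t, (t < q)%N -> (size (E t) <= r)%N) ->
  exists a : 'I_nu -> {poly R}, [/\ (forall k, (size (a k) <= r)%N),
    (forall k : 'I_nu, (q <= k)%N -> a k = f k) &
    (forall t, (t < q)%N -> ee a t = E t)].
Proof.
move=> hf hE.
suff: forall m, (m <= q)%N -> exists a : 'I_nu -> {poly R}, [/\ (forall k, (size (a k) <= r)%N),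
    (forall k : 'I_nu, (q <= k)%N -> a k = f k) &
    (forall t, (q - m <= t)%N -> (t < q)%N -> ee a t = E t)].
  move=> /(_ q (leqnn q)) [a [h1 h2 h3]]; exists a; split => // t; apply: h3.
  by rewrite subnn.
elim=> [_|m IH hm].
  exists f; split => // t; rewrite subn0 => h1 h2; by rewrite ltnNge h1 in h2.
have [a [h1 h2 h3]] := IH (ltnW hm).
pose t0 := (q - m.+1)%N.
have t0q : (t0 < q)%N by rewrite /t0; lia.
have t0nu : (t0 < nu)%N := ltn_trans t0q hq.
pose v := E t0 - \sum_(k < nu | (t0 < k)%N) (a k)^`(k - t0) *+ 'C(k, t0).
exists (fun k => if val k == t0 then v else a k); split.
- move=> k; case: eqP => _; last exact: h1.
  rewrite /v; apply: (leq_trans (size_polyD (E t0) _)); rewrite geq_max size_polyN hE //=.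
  apply: size_sum_le => k' _; apply: leq_trans (size_Mn_le _ _ _) _.
  exact: leq_trans (size_derivn_le _ _ _) (h1 k').
- move=> k hk; rewrite ifN_eq ?h2 //; apply/eqP => e; move: hk; rewrite e; lia.
- move=> t ht htq; have [e|ne] := eqVneq t t0.
    rewrite e (@ee_split _ t0 t0nu) /= eqxx /v.
    rewrite [X in _ + X](eq_bigr (fun k : 'I_nu => (a k)^`(k - t0) *+ 'C(k, t0))) ?subrK //.
    by move=> k hk; rewrite ifN_eq // neq_ltn hk orbT.
  have ht' : (q - m <= t)%N by move: ht ne; rewrite /t0; lia.
  rewrite -h3 //; apply: eq_bigr => k hk; rewrite ifN_eq //.
  by apply/eqP => e; move: hk ht' ne; rewrite e /t0; lia.
Qed.

Lemma core_exists (s : R) (j : nat) (f : 'I_nu -> {poly R}) :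
  (forall k, (size (f k) <= r)%N) ->
  exists a : 'I_nu -> {poly R}, [/\ (forall k, (size (a k) <= r)%N),
    (forall k : 'I_nu, (q <= k)%N -> a k = f k) &
    (forall i, (i < q)%N -> Qp a i = (s * (i == j)%:R)%:P)].
Proof.
move=> hf; have [E [hE1 hE2]] := e_exists s j.
have hE : forall t, (t < q)%N -> (size (E t) <= r)%N.
  by move=> t ht; apply: leq_trans (hE1 t) _; lia.
have [a [h1 h2 h3]] := @a_exists f E hf hE.

exists a; split => // i hi; rewrite Qe' // -hE2 //.
by apply: eq_bigr => t _; rewrite h3.
Qed.

Lemma core_uniq (a : 'I_nu -> {poly R}) :
  (forall k : 'I_nu, (q <= k)%N -> a k = 0) ->
  (forall i, (i < q)%N -> Qp a i = 0) -> forall k, a k = 0.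
Proof.
move=> h0 hQ; apply: a_uniq => //; apply: e_uniq => i hi.
by rewrite -Qe' // hQ.
Qed.

End Core.
Arguments Qp {R nu}.
Arguments ee {R nu}.

Lemma sum_mxvec (V : nmodType) m n (G : 'I_(m * n) -> V) :
  \sum_(x < m * n) G x = \sum_(k < m) \sum_(l < n) G (mxvec_index k l).
Proof.
rewrite pair_big /= (reindex (uncurry (@mxvec_index m n))) /=.
  by apply: eq_bigr => -[k l].
exact: curry_mxvec_bij.
Qed.

Lemma mx_ext (T : Type) m n p (C D : 'M[T]_(m * n, p)) :
  (forall k l j, C (mxvec_index k l) j = D (mxvec_index k l) j) -> C = D.
Proof. by move=> H; apply/matrixP => x j; case/mxvec_indexP: x => k l. Qed.

Lemma poly_all_roots (F : numDomainType) (p : {poly F}) : (forall z, p.[z] = 0) -> p = 0.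
Proof.
move=> H; apply/eqP; apply: contraT => hp.
have := max_poly_roots hp (rs := [seq n%:R | n <- iota 0 (size p)]).
rewrite size_map size_iota ltnn; apply.
  by apply/allP => x _; rewrite /root H.
rewrite map_inj_uniq ?iota_uniq // => m n /eqP; rewrite eqr_nat => /eqP.
by [].
Qed.

Section Main.
Variables (R : realType) (q r nu : nat).
Hypothesis hq : (q < nu)%N.
Hypothesis hnr : (nu <= r)%N.

Definition pc (C : 'M[R]_(nu * r, q)) (j : 'I_q) (k : 'I_nu) : {poly R} :=
  \sum_(l < r) C (mxvec_index k l) j *: 'X^l.
Definition Pm (C : 'M[R]_(nu * r, q)) (i j : 'I_q) := Qp (pc C j) i.

Lemma eval_M0 C z (i j : 'I_q) :
  (M0 q r nu z *m map_mx (fun x : R => x%:C)%C C) i j =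
  (map_poly (real_complex R) (Pm C i j)).[z].
Proof.
rewrite !mxE sum_mxvec /Pm /Qp rmorph_sum horner_sum; apply: eq_bigr => k _.
rewrite /pc mulr_suml raddf_sum rmorph_sum horner_sum; apply: eq_bigr => l _.
rewrite !mxE mxvecE !mxE big_ord1 !mxE -scalerAl /= derivnZ map_polyZ hornerZ mulrC.
congr (_ * _); rewrite -!exprD addnC !derivnXn raddfMn /= map_polyXn.
by [].
Qed.


Lemma csE C : const_solution q r nu C <-> forall i j : 'I_q, Pm C i j = ((i == j)%:R)%:P.
Proof.
split=> [H i j|H z]; last first.
  apply/matrixP => i j; rewrite eval_M0 H map_polyC hornerC !mxE.
  by case: (i == j); rewrite /= ?raddf0 // (rmorph1 (real_complex R)).
apply: (map_poly_inj (real_complex R)); rewrite map_polyC.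
apply/eqP; rewrite -subr_eq0; apply/eqP; apply: poly_all_roots => z.
rewrite hornerD hornerN hornerC -eval_M0 H !mxE.
case: (i == j); rewrite /= ?raddf0 ?(rmorph1 (real_complex R)).
all: by rewrite ?subrr ?addr0.
Qed.

Lemma coef_sumX (F : nzSemiRingType) n (c : 'I_n -> F) (l : 'I_n) :
  (\sum_(l' < n) c l' *: 'X^l')`_l = c l.
Proof.
rewrite coef_sum (bigD1 l) //= coefZ coefXn eqxx mulr1 big1 ?addr0 // => l' hl'.
by rewrite coefZ coefXn val_eqE eq_sym (negbTE hl') mulr0.
Qed.

Lemma pc_coef C j k (l : 'I_r) : (pc C j k)`_l = C (mxvec_index k l) j.
Proof. exact: coef_sumX. Qed.

Lemma pcD C D j k : pc (C + D) j k = pc C j k + pc D j k.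
Proof. by rewrite /pc -big_split; apply: eq_bigr => l _; rewrite mxE scalerDl. Qed.

Lemma pcZ a C j k : pc (a *: C) j k = a *: pc C j k.
Proof. by rewrite /pc scaler_sumr; apply: eq_bigr => l _; rewrite mxE scalerA. Qed.

Lemma Qp_ext (a b : 'I_nu -> {poly R}) i : a =1 b -> Qp a i = Qp b i.
Proof. by move=> e; apply: eq_bigr => k _; rewrite e. Qed.

Lemma QpD (a b : 'I_nu -> {poly R}) i : Qp (fun k => a k + b k) i = Qp a i + Qp b i.
Proof. by rewrite /Qp -big_split; apply: eq_bigr => k _; rewrite mulrDl derivnD. Qed.

Lemma QpZ (c : R) (a : 'I_nu -> {poly R}) i : Qp (fun k => c *: a k) i = c *: Qp a i.
Proof. by rewrite /Qp scaler_sumr; apply: eq_bigr => k _; rewrite -scalerAl derivnZ. Qed.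

Lemma PmD C D i j : Pm (C + D) i j = Pm C i j + Pm D i j.
Proof. by rewrite /Pm -QpD; apply: Qp_ext => k; rewrite pcD. Qed.

Lemma PmZ a C i j : Pm (a *: C) i j = a *: Pm C i j.
Proof. by rewrite /Pm -QpZ; apply: Qp_ext => k; rewrite pcZ. Qed.

Lemma PmN C i j : Pm (- C) i j = - Pm C i j.
Proof. by rewrite -scaleN1r PmZ scaleN1r. Qed.

Lemma PmB C D i j : Pm (C - D) i j = Pm C i j - Pm D i j.
Proof. by rewrite PmD PmN. Qed.


Definition mkC (A : 'I_q -> 'I_nu -> {poly R}) : 'M[R]_(nu * r, q) :=
  \matrix_(x, j) (mxvec (\matrix_(k, l) (A j k)`_(l : 'I_r))) 0 x.

Lemma mkCE (A : 'I_q -> 'I_nu -> {poly R}) k l j : mkC A (mxvec_index k l) j = (A j k)`_l.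
Proof. by rewrite !mxE mxvecE mxE. Qed.

Lemma pc_mkC (A : 'I_q -> 'I_nu -> {poly R}) j k : (size (A j k) <= r)%N -> pc (mkC A) j k = A j k.
Proof.
move=> hs; rewrite /pc.
under eq_bigr => l _ do rewrite mkCE.
rewrite -poly_def; apply/polyP => n; rewrite coef_poly.
by case: ifP => // /negbT; rewrite -leqNgt => hn; rewrite nth_default // (leq_trans hs hn).
Qed.

Lemma shP (k : 'I_(nu - q)) : (k + q < nu)%N.
Proof. by rewrite addnC -ltn_subRL. Qed.

Definition sh (k : 'I_(nu - q)) : 'I_nu := Ordinal (shP k).

Definition fp (C : 'M[R]_(nu * r, q)) (X : 'M[R]_((nu - q) * r, q)) :=
  forall (k : 'I_(nu - q)) (l : 'I_r) (j : 'I_q), C (mxvec_index (sh k) l) j = X (mxvec_index k l) j.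

Lemma exists_sol (s : R) X : exists C,
  (forall i j, Pm C i j = (s * (i == j)%:R)%:P) /\ fp C X.
Proof.
pose f (j : 'I_q) (k : 'I_nu) : {poly R} :=
  \sum_(l < r) (\sum_(k' | sh k' == k) X (mxvec_index k' l) j) *: 'X^l.
have hf j k : (size (f j k) <= r)%N.
  apply: size_sum_le => l _; apply: leq_trans (size_scale_leq _ _) _.
  by rewrite size_polyXn.
have : forall j : 'I_q, exists a : 'I_nu -> {poly R}, [/\ (forall k, (size (a k) <= r)%N),
    (forall k : 'I_nu, (q <= k)%N -> a k = f j k) &
    (forall i, (i < q)%N -> Qp a i = (s * (i == j :> nat)%:R)%:P)].
  by move=> j; apply: (@core_exists _ q r nu hq hnr s j (f j)).
case/fin_all_exists => A HA.
exists (mkC A); split.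
  move=> i j; have [h1 h2 h3] := HA j.
  rewrite /Pm -(h3 i (ltn_ord i)); apply: Qp_ext => k; exact: pc_mkC.
move=> k l j; have [h1 h2 h3] := HA j.
rewrite mkCE h2 /=; last by rewrite leq_addl.
rewrite /f coef_sumX (eq_bigl (fun k' => k' == k)) ?big_pred1_eq // => k'.
by rewrite -!val_eqE /= eqn_add2r.
Qed.

Lemma uniq_sol C : (forall i j, Pm C i j = 0) -> fp C 0 -> C = 0.
Proof.
move=> hP hf; apply: mx_ext => k l j; rewrite mxE -pc_coef.
have -> : pc C j k = 0; last by rewrite coef0.
apply: (@core_uniq _ q r nu hq hnr) => [k' hk'|i hi].
  have hk'' : (k' - q < nu - q)%N by rewrite ltn_sub2r.
  have -> : k' = sh (Ordinal hk'').
    by apply: val_inj; rewrite /= subnK.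
  rewrite /pc big1 // => l' _; by rewrite hf mxE scale0r.
by have := hP (Ordinal hi) j; rewrite /Pm.
Qed.

End Main.
Arguments Pm {R q r nu}.
Arguments fp {R q r nu}.
Arguments sh {q nu}.

Theorem proposition7p5 (R : realType) (q r nu : nat) :
  (0 < q)%N -> (0 < r)%N -> (0 < nu)%N -> (q < nu)%N -> (nu <= r)%N ->
  (exists C : 'M[R]_(nu * r, q), const_solution q r nu C) /\
  affine_of_dim ((nu - q) * r * q)%N
    (fun C : 'M[R]_(nu * r, q) => const_solution q r nu C).
Proof.
move=> hq0 hr0 hnu0 hq hnr.
have [C0 [hC0 _]] := @exists_sol R q r nu hq hnr 1 0.
have sC0 : const_solution q r nu C0.
  by apply/(@csE R q r nu) => i j; rewrite hC0 mul1r.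
split; first by exists C0.
have hom_ex (X : 'M[R]_((nu - q) * r, q)) : exists C : 'M[R]_(nu * r, q), (forall i j, Pm C i j = 0) /\ fp C X.
  have [C [h1 h2]] := @exists_sol R q r nu hq hnr 0 X.
  by exists C; split => // i j; rewrite h1 mul0r.
pose psi (X : 'M[R]_((nu - q) * r, q)) : 'M[R]_(nu * r, q) :=
  proj1_sig (constructive_indefinite_description _ (hom_ex X)).
have psiP X : (forall i j, Pm (psi X) i j = 0) /\ fp (psi X) X :=
  proj2_sig (constructive_indefinite_description _ (hom_ex X)).
have psi_lin : forall a X Y, psi (a *: X + Y) = a *: psi X + psi Y.
  move=> a X Y; apply/eqP; rewrite -subr_eq0; apply/eqP.
  apply: (@uniq_sol R q r nu hq hnr).
    by move=> i j; rewrite PmB PmD PmZ !(proj1 (psiP _)) scaler0 addr0 subrr.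
  by move=> k l j; rewrite !mxE !(proj2 (psiP _)) !mxE subrr.
pose flM := GRing.isLinear.Build _ _ _ _ psi psi_lin.
pose fL : {linear _ -> _} := HB.pack psi flM.
pose Psi := linfun fL.
have PsiE X : Psi X = psi X by rewrite lfunE.
exists C0, (Psi @: fullv)%VS; split.
  rewrite limg_dim_eq ?dimvf ?dim_matrix // capfv; apply/eqP/lker0P => X Y.
  rewrite !PsiE => e; apply: mx_ext => k l j.
  by rewrite -(proj2 (psiP X)) -(proj2 (psiP Y)) e.
move=> C; split=> [hC|].
  apply/memv_imgP.
  pose X : 'M[R]_((nu - q) * r, q) :=
    \matrix_(x, j) mxvec (\matrix_(k, l) (C - C0) (mxvec_index (sh k) l) j) 0 x.
  exists X; first exact: memvf.
  rewrite PsiE; apply/eqP; rewrite -subr_eq0; apply/eqP.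
  apply: (@uniq_sol R q r nu hq hnr).
    move=> i j; rewrite PmB PmB (proj1 (psiP _)) subr0.
    by move/(@csE R q r nu): hC => ->; move/(@csE R q r nu): sC0 => ->; rewrite subrr.
  by move=> k l j; rewrite !mxE (proj2 (psiP _)) !mxE mxvecE mxE !mxE subrr.
case/memv_imgP => X _; rewrite PsiE => e.
have -> : C = (C - C0) + C0 by rewrite subrK.
apply/(@csE R q r nu) => i j.
rewrite e PmD (proj1 (psiP X)) add0r.
by move/(@csE R q r nu): sC0 => ->.
Qed.
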